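(* Let $A$ be a positive $2\times 2$ row stochastic matrix that is not column stochastic. If the column scaled matrix $A\,Y(A)$ is doubly stochastic, then $A=\begin{pmatrix} a & 1-a\\ a & 1-a\end{pmatrix}$ for some $a\in(0,1)$ with $a\neq 1/2$, and $S(A)=A\,Y(A)=\begin{pmatrix} 1/2 & 1/2\\ 1/2 & 1/2\end{pmatrix}$. Let $A$ be a positive $2\times 2$ column stochastic matrix that is not row stochastic. If the row scaled matrix $X(A)\,A$ is doubly stochastic, then $A=\begin{pmatrix} a & a\\ 1-a & 1-a\end{pmatrix}$ for some $a\in(0,1)$ with $a\neq 1/2$, and $S(A)=X(A)\,A=\begin{pmatrix} 1/2 & 1/2\\ 1/2 & 1/2\end{pmatrix}$.
   Context: A positive matrix has all entries positive. For an $n\times n$ matrix $A=(a_{i,j})$ let $\mathrm{row}_i(A)=\sum_j a_{i,j}$ and $\mathrm{col}_j(A)=\sum_i a_{i,j}$. $A$ is row stochastic if all row sums equal $1$, column stochastic if all column sums equal $1$, and doubly stochastic if both. For positive $A$ let $X(A)=\mathrm{diag}(1/\mathrm{row}_1(A),\ldots,1/\mathrm{row}_n(A))$ and $Y(A)=\mathrm{diag}(1/\mathrm{col}_1(A),\ldots,1/\mathrm{col}_n(A))$. $S(A)$ denotes the alternate minimization limit of $A$: the limit of the sequence $A^{(0)}=A$, $A^{(2k+1)}=A^{(2k)}\,Y(A^{(2k)})$, $A^{(2k+2)}=X(A^{(2k+1)})\,A^{(2k+1)}$ ($k\ge 0$), which converges to a doubly stochastic matrix and which is unchanged if $A$ is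 replaced by $PAQ$ for positive diagonal $P,Q$. *)

(* Defs.v *)
From HB Require Import structures.
From mathcomp Require Import all_boot all_order all_algebra.
From mathcomp Require Import all_classical all_reals all_analysis.
Set Implicit Arguments. Unset Strict Implicit. Unset Printing Implicit Defensive.
Import Order.TTheory GRing.Theory Num.Theory.
Import numFieldNormedType.Exports.
Local Open Scope ring_scope.

Section Defs.
Variables (R : realType) (n : nat).
Implicit Types A : 'M[R]_n.

Definition rowsum A (i : 'I_n) : R := \sum_(j < n) A i j.
Definition colsum A (j : 'I_n) : R := \sum_(i < n) A i j.

Definition positive_mx A : Prop := forall i j, 0 < A i j.
Definition row_stochastic A : Prop := forall i, rowsum A i = 1.
Definition col_stochastic A : Prop := forall j, colsum A j = 1.
Definition doubly_stochastic A : Prop := row_stochastic A /\ col_stochastic A.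

Definition Xmx A : 'M[R]_n := diag_mx (\row_i (rowsum A i)^-1).
Definition Ymx A : 'M[R]_n := diag_mx (\row_j (colsum A j)^-1).

Fixpoint am_seq A (k : nat) : 'M[R]_n :=
  match k with
  | 0 => A
  | k'.+1 => let B := am_seq A k' in
             if odd k' then Xmx B *m B else B *m Ymx B
  end.

End Defs.

(* Main.v *)
Require Import Defs.
From HB Require Import structures.
From mathcomp Require Import all_boot all_order all_algebra.
From mathcomp Require Import all_classical all_reals all_analysis.
From mathcomp Require Import ring lra.
Import Order.TTheory GRing.Theory Num.Theory.
Import numFieldNormedType.Exports.
Local Open Scope classical_set_scope.
Local Open Scope ring_scope.
Section H.
Variable R : realType.

Lemma ord2P (i : 'I_2) : i = 0 \/ i = 1.
Proof. case: i => [[|[|m]]] Hi; [left|right|by []]; exact: val_inj. Qed.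

Lemma sum2 (F : 'I_2 -> R) : \sum_(i < 2) F i = F 0 + F 1.
Proof. rewrite !big_ord_recl big_ord0 addr0; congr (_ + F _); exact: val_inj. Qed.

Definition J : 'M[R]_2 := \matrix_(i < 2, j < 2) (2^-1 : R).

Lemma rowsumJ i : rowsum J i = 1.
Proof. rewrite /rowsum sum2 !mxE; field; done. Qed.
Lemma colsumJ i : colsum J i = 1.
Proof. rewrite /colsum sum2 !mxE; field; done. Qed.

Lemma XJ : Xmx J *m J = J.
Proof. apply/matrixP=> i j; rewrite /Xmx mul_diag_mx !mxE rowsumJ invr1 mul1r. done. Qed.
Lemma YJ : J *m Ymx J = J.
Proof. apply/matrixP=> i j; rewrite /Ymx mul_mx_diag !mxE colsumJ invr1 mulr1. done. Qed.

Lemma amJ (A : 'M[R]_2) k : am_seq A k = J -> forall m, am_seq A (m + k) = J.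
Proof. move=> Hk; elim=> [|m IH] //=; rewrite IH; case: ifP => _; [exact: XJ|exact: YJ]. Qed.

Lemma cvgJ (A : 'M[R]_2) k : am_seq A k = J ->
  forall i j, (fun k => am_seq A k i j) @ \oo --> (2^-1 : R).
Proof.
move=> Hk i j; apply: cvg_near_cst; exists k => // m /= hm.
by rewrite -(subnK hm) amJ // mxE.
Qed.

End H.
Lemma part1 (R : realType) (A : 'M[R]_2) :
     positive_mx A -> row_stochastic A -> ~ col_stochastic A ->
     doubly_stochastic (A *m Ymx A) ->
     (exists a : R, 0 < a < 1 /\ a != 2^-1 /\
        A = \matrix_(i < 2, j < 2) (if j == 0 then a else 1 - a)) /\
     (forall i j, (fun k => am_seq A k i j) @ \oo --> (2^-1 : R)) /\
     A *m Ymx A = \matrix_(i < 2, j < 2) (2^-1 : R).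
Proof.
move=> pos rs ncs [drs _].
have r0 := rs 0; have r1 := rs 1.
rewrite /rowsum sum2 in r0; rewrite /rowsum sum2 in r1.
have d0 := drs 0; have d1 := drs 1.
rewrite /rowsum sum2 /Ymx mul_mx_diag !mxE /colsum !sum2 in d0.
rewrite /rowsum sum2 /Ymx mul_mx_diag !mxE /colsum !sum2 in d1.
have p0 := pos 0 0; have p1 := pos 0 1; have p2 := pos 1 0; have p3 := pos 1 1.
set p := A 0 0 in r0 d0 d1 p0 *; set q := A 1 0 in r1 d0 d1 p2 *.
have e01 : A 0 1 = 1 - p by lra.
have e11 : A 1 1 = 1 - q by lra.
rewrite e01 e11 in d0 d1.
have c1 : p + q != 0 by rewrite gt_eqF //; lra.
have c2 : 1 - p + (1 - q) != 0 by rewrite gt_eqF //; lra.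
have E0 : p * (1 - p + (1 - q)) + (1 - p) * (p + q) - (p + q) * (1 - p + (1 - q)) = 0.
  have -> : p * (1 - p + (1 - q)) + (1 - p) * (p + q) - (p + q) * (1 - p + (1 - q))
     = (p + q) * (1 - p + (1 - q)) * (p * (p + q)^-1 + (1 - p) * (1 - p + (1 - q))^-1 - 1)
    by field; rewrite c1 c2.
  by rewrite d0 subrr mulr0.
have E1 : q * (1 - p + (1 - q)) + (1 - q) * (p + q) - (p + q) * (1 - p + (1 - q)) = 0.
  have -> : q * (1 - p + (1 - q)) + (1 - q) * (p + q) - (p + q) * (1 - p + (1 - q))
     = (p + q) * (1 - p + (1 - q)) * (q * (p + q)^-1 + (1 - q) * (1 - p + (1 - q))^-1 - 1)
    by field; rewrite c1 c2.
  by rewrite d1 subrr mulr0.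
have pq1 : p + q != 1.
  apply/eqP => h; apply: ncs => j; rewrite /colsum sum2.
  by case: (ord2P j) => ->; rewrite ?e01 ?e11 /= -/p -/q; lra.
have F : (p - q) * (2 - 2 * (p + q)) = 0.
  have -> : (p - q) * (2 - 2 * (p + q)) =
    (p * (1 - p + (1 - q)) + (1 - p) * (p + q) - (p + q) * (1 - p + (1 - q))) -
    (q * (1 - p + (1 - q)) + (1 - q) * (p + q) - (p + q) * (1 - p + (1 - q))) by ring.
  by rewrite E0 E1 subrr.
have pq : p = q.
  move/eqP: F; rewrite mulf_eq0 => /orP [/eqP h|/eqP h]; first lra.
  have h1 : p + q = 1 by lra.
  by rewrite h1 eqxx in pq1.
have AY : A *m Ymx A = J R.
  apply/matrixP => i j; rewrite /Ymx mul_mx_diag !mxE /colsum sum2.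
  case: (ord2P i) => ->; case: (ord2P j) => ->; rewrite /= -/p -/q ?e01 ?e11 -pq; field;
  rewrite gt_eqF //; lra.
split; last split; last by [].
- exists p; split; first lra.
  split.
    apply/eqP => h; apply: ncs => j; rewrite /colsum sum2.
    by case: (ord2P j) => ->; rewrite ?e01 ?e11 /= -/p -/q -pq h; field.
  apply/matrixP => i j; rewrite mxE.
  by case: (ord2P i) => ->; case: (ord2P j) => ->; rewrite /= ?e01 ?e11 -/p -/q; try rewrite -pq.
- by apply: (@cvgJ _ _ 1); rewrite /= AY.
Qed.
Lemma part2 (R : realType) (A : 'M[R]_2) :
     positive_mx A -> col_stochastic A -> ~ row_stochastic A ->
     doubly_stochastic (Xmx A *m A) ->
     (exists a : R, 0 < a < 1 /\ a != 2^-1 /\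
        A = \matrix_(i < 2, j < 2) (if i == 0 then a else 1 - a)) /\
     (forall i j, (fun k => am_seq A k i j) @ \oo --> (2^-1 : R)) /\
     Xmx A *m A = \matrix_(i < 2, j < 2) (2^-1 : R).
Proof.
move=> pos cs nrs [_ dcs].
have r0 := cs 0; have r1 := cs 1.
rewrite /colsum sum2 in r0; rewrite /colsum sum2 in r1.
have d0 := dcs 0; have d1 := dcs 1.
rewrite /colsum sum2 /Xmx mul_diag_mx !mxE /rowsum !sum2 in d0.
rewrite /colsum sum2 /Xmx mul_diag_mx !mxE /rowsum !sum2 in d1.
have p0 := pos 0 0; have p1 := pos 1 0; have p2 := pos 0 1; have p3 := pos 1 1.
set p := A 0 0 in r0 d0 d1 p0 *; set q := A 0 1 in r1 d0 d1 p2 *.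
have e01 : A 1 0 = 1 - p by lra.
have e11 : A 1 1 = 1 - q by lra.
rewrite e01 e11 in d0 d1.
have c1 : p + q != 0 by rewrite gt_eqF //; lra.
have c2 : 1 - p + (1 - q) != 0 by rewrite gt_eqF //; lra.
have E0 : p * (1 - p + (1 - q)) + (1 - p) * (p + q) - (p + q) * (1 - p + (1 - q)) = 0.
  have -> : p * (1 - p + (1 - q)) + (1 - p) * (p + q) - (p + q) * (1 - p + (1 - q))
     = (p + q) * (1 - p + (1 - q)) * ((p + q)^-1 * p + (1 - p + (1 - q))^-1 * (1 - p) - 1)
    by field; rewrite c1 c2.
  by rewrite d0 subrr mulr0.
have E1 : q * (1 - p + (1 - q)) + (1 - q) * (p + q) - (p + q) * (1 - p + (1 - q)) = 0.
  have -> : q * (1 - p + (1 - q)) + (1 - q) * (p + q) - (p + q) * (1 - p + (1 - q))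
     = (p + q) * (1 - p + (1 - q)) * ((p + q)^-1 * q + (1 - p + (1 - q))^-1 * (1 - q) - 1)
    by field; rewrite c1 c2.
  by rewrite d1 subrr mulr0.
have pq1 : p + q != 1.
  apply/eqP => h; apply: nrs => j; rewrite /rowsum sum2.
  by case: (ord2P j) => ->; rewrite ?e01 ?e11 /= -/p -/q; lra.
have F : (p - q) * (2 - 2 * (p + q)) = 0.
  have -> : (p - q) * (2 - 2 * (p + q)) =
    (p * (1 - p + (1 - q)) + (1 - p) * (p + q) - (p + q) * (1 - p + (1 - q))) -
    (q * (1 - p + (1 - q)) + (1 - q) * (p + q) - (p + q) * (1 - p + (1 - q))) by ring.
  by rewrite E0 E1 subrr.
have pq : p = q.
  move/eqP: F; rewrite mulf_eq0 => /orP [/eqP h|/eqP h]; first lra.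
  have h1 : p + q = 1 by lra.
  by rewrite h1 eqxx in pq1.
have XA : Xmx A *m A = J R.
  apply/matrixP => i j; rewrite /Xmx mul_diag_mx !mxE /rowsum sum2.
  case: (ord2P i) => ->; case: (ord2P j) => ->; rewrite /= -/p -/q ?e01 ?e11 -pq; field;
  rewrite gt_eqF //; lra.
have AY : A *m Ymx A = A.
  apply/matrixP => i j; rewrite /Ymx mul_mx_diag !mxE cs invr1 mulr1 //.
split; last split; last by [].
- exists p; split; first lra.
  split.
    apply/eqP => h; apply: nrs => j; rewrite /rowsum sum2.
    by case: (ord2P j) => ->; rewrite ?e01 ?e11 /= -/p -/q -pq h; field.
  apply/matrixP => i j; rewrite mxE.
  by case: (ord2P i) => ->; case: (ord2P j) => ->; rewrite /= ?e01 ?e11 -/p -/q; try rewrite -pq.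
- by apply: (@cvgJ _ _ 2); rewrite /= AY.
Qed.
Theorem theorem8 (R : realType) :
  (forall A : 'M[R]_2,
     positive_mx A -> row_stochastic A -> ~ col_stochastic A ->
     doubly_stochastic (A *m Ymx A) ->
     (exists a : R, 0 < a < 1 /\ a != 2^-1 /\
        A = \matrix_(i < 2, j < 2) (if j == 0 then a else 1 - a)) /\
     (forall i j, (fun k => am_seq A k i j) @ \oo --> (2^-1 : R)) /\
     A *m Ymx A = \matrix_(i < 2, j < 2) (2^-1 : R))
  /\
  (forall A : 'M[R]_2,
     positive_mx A -> col_stochastic A -> ~ row_stochastic A ->
     doubly_stochastic (Xmx A *m A) ->
     (exists a : R, 0 < a < 1 /\ a != 2^-1 /\
        A = \matrix_(i < 2, j < 2) (if i == 0 then a else 1 - a)) /\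
     (forall i j, (fun k => am_seq A k i j) @ \oo --> (2^-1 : R)) /\
     Xmx A *m A = \matrix_(i < 2, j < 2) (2^-1 : R)).
Proof. split=> A; [exact: part1|exact: part2]. Qed.
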